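(* Let $R$ be a commutative ring with $1$ and let $\alpha_0=1,\alpha_1,\alpha_2,\dots$ be a sequence in $R$. Define the infinite matrix $M=M(\alpha)$ with entries $M_{i,j}$, $i,j\in\mathbb N$, by $M_{0,0}=1$, $M_{0,j}=1$, $M_{i,0}=\alpha_i$, and $M_{i,j}=M_{i-1,j}+M_{i,j-1}$ for $i,j\geq1$. Define the unipotent lower-triangular infinite matrix $L=L(\alpha)$ by $L_{i,j}=M_{i-j,j}$ for $i\geq j\geq0$ and $L_{i,j}=0$ for $j>i$. Let $U$ be the infinite upper-triangular matrix with entries $U_{i,j}=\binom{j}{i}$. Then $M(\alpha)=L(\alpha)U$. *)

(* Defs.v *)
From mathcomp Require Import all_boot all_order all_algebra.
Set Implicit Arguments. Unset Strict Implicit. Unset Printing Implicit Defensive.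
Import GRing.Theory.
Local Open Scope ring_scope.

Fixpoint Mmat (R : comRingType) (alpha : nat -> R) (i : nat) : nat -> R :=
  match i with
  | 0 => fun _ => 1
  | i'.+1 =>
      fix Mrow (j : nat) : R :=
        match j with
        | 0 => alpha i'.+1
        | j'.+1 => Mmat alpha i' j'.+1 + Mrow j'
        end
  end.

Definition Lmat (R : comRingType) (alpha : nat -> R) (i j : nat) : R :=
  if (j <= i)%N then Mmat alpha (i - j) j else 0.

Definition Umat (R : comRingType) (i j : nat) : R := ('C(j, i))%:R.

(* Product of infinite matrices A * B where A is lower triangular
   (A i k = 0 for k > i), so the sum over k is finite: k ranges over 0..i. *)
Definition lt_mul (R : comRingType) (A B : nat -> nat -> R) (i j : nat) : R :=
  \sum_(k < i.+1) A i k * B k j.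

(* Main.v *)
Require Import Defs.
From mathcomp Require Import all_boot all_order all_algebra.
Local Open Scope ring_scope.
Import GRing.Theory.

Section S.
Variables (R : comRingType) (alpha : nat -> R).
Local Notation m := (Mmat alpha).

Lemma Mrec n j : m n.+1 j.+1 = m n j.+1 + m n.+1 j.
Proof. reflexivity. Qed.
Lemma M0 j : m 0 j = 1.
Proof. reflexivity. Qed.

Definition G (i j : nat) : R := \sum_(k < i.+1) m (i - k) k * ('C(j, k))%:R.

Lemma keyD n j :
  \sum_(k < n.+1) m (n - k) k.+1 * ('C(j, k))%:R = G n j.+1.
Proof.
case: n => [|p].
  by rewrite /G !big_ord_recl !big_ord0 /= !bin0.
rewrite big_ord_recr /= subnn M0 mul1r.
under eq_bigr => k _.
  rewrite (_ : (p.+1 - k)%N = (p - k).+1)%N; last by rewrite subSn // -ltnS.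
  rewrite Mrec mulrDl.
over.
rewrite big_split /= -addrA.
have -> : \sum_(i < p.+1) m (p - i).+1 i * ('C(j, i))%:R + ('C(j, p.+1))%:R
   = \sum_(k < p.+2) m (p.+1 - k) k * ('C(j, k))%:R.
  rewrite [in RHS]big_ord_recr /= subnn M0 mul1r; congr (_ + _).
  by apply: eq_bigr => k _; rewrite subSn // -ltnS.
rewrite /G (big_ord_recl p.+1 (fun k : 'I_p.+2 => m (p.+1 - k) k * ('C(j, k))%:R)) [in RHS]big_ord_recl /= ?subn0 ?bin0.
under [in RHS]eq_bigr => k _ do rewrite /bump /= ?add1n ?subSS binS natrD mulrDr.
rewrite big_split /=.
rewrite addrCA; congr (_ + _); rewrite addrC; congr (_ + _); apply: eq_bigr => k _; rewrite /bump /= add1n subSS.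
Qed.

Lemma GS n j : G n.+1 j.+1 = G n.+1 j + G n j.+1.
Proof.

have E : forall c, G n.+1 c = alpha n.+1 * ('C(c, 0))%:R +
    \sum_(k < n.+1) m (n - k) k.+1 * ('C(c, k.+1))%:R.
  move=> c; rewrite /G big_ord_recl subn0; congr (_ + _).
rewrite -(keyD n j) !E !bin0 -addrA; congr (_ + _).
rewrite -big_split /=; apply: eq_bigr => k _.
by rewrite binS natrD mulrDr addrC.
Qed.

Lemma MG i j : m i j = G i j.
Proof.
elim: i j => [|n IH] j.
  by rewrite /G big_ord_recl big_ord0 /= bin0 mulr1 addr0.
elim: j => [|j IHj].
  rewrite /G big_ord_recl /= ?subn0 bin0 mulr1 big1 ?addr0 // => k _.
  by rewrite bin0n /= mulr0.
by rewrite Mrec GS IHj IH addrC.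
Qed.
End S.

Theorem proposition4p6 (R : comRingType) (alpha : nat -> R) (h0 : alpha 0%N = 1) :
  forall i j : nat, Mmat alpha i j = lt_mul (Lmat alpha) (@Umat R) i j.
Proof.
move=> i j; rewrite MG /G /lt_mul; apply: eq_bigr => k _.
by rewrite /Lmat /Umat -ltnS ltn_ord.
Qed.
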